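(* Let $K$ be an algebraically closed field and $\varphi:V\to V$ a $K$-linear map of a finite dimensional $K$-vector space $V$. Let $\{\lambda_1,\dots,\lambda_p\}\subseteq K$ be the set of all ($p$ distinct) eigenvalues of $\varphi$ and $m_i=\dim(\ker(\varphi-\lambda_i1_V))$. Then for each $1\le i\le p$ there exists a $K$-subalgebra $\mathcal M_i$ of the full matrix algebra $M_{m_i\times m_i}(K[t])$ such that the centralizer $C_\varphi=\{\psi\in\mathrm{Hom}_K(V,V)\mid\psi\circ\varphi=\varphi\circ\psi\}$ is a homomorphic image of the direct product $K$-algebra $\mathcal M_1\times\mathcal M_2\times\cdots\times\mathcal M_p$.
   Context: $K[t]$ is the polynomial ring over $K$ in one indeterminate. *)

(* Defs.v *)
From HB Require Import structures.
From mathcomp Require Import all_boot all_order all_algebra.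
Set Implicit Arguments. Unset Strict Implicit. Unset Printing Implicit Defensive.
Import Order.TTheory GRing.Theory Num.Theory.
Local Open Scope ring_scope.

(* Linear maps of V = K^n are represented by n x n matrices acting on row
   vectors (v |-> v *m phi), as in mxalgebra ([eigenvalue], [eigenspace]). *)

Definition is_K_subalgebra (K : fieldType) (m : nat)
    (S : pred 'M[{poly K}]_m) : Prop :=
  [/\ (1%:M : 'M[{poly K}]_m) \in S,
      forall A B, A \in S -> B \in S -> A + B \in S,
      forall A B, A \in S -> B \in S -> A *m B \in S
    & forall (c : K) A, A \in S -> c%:P *: A \in S].

Definition centralizer (K : fieldType) (n : nat) (phi : 'M[K]_n) :
  pred 'M[K]_n := fun psi => psi *m phi == phi *m psi.

(* Main.v *)
Require Import Defs.
From HB Require Import structures.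
From mathcomp Require Import all_boot all_order all_algebra.
From Stdlib Require Import ClassicalEpsilon.
Set Implicit Arguments. Unset Strict Implicit. Unset Printing Implicit Defensive.
Import GRing.Theory.
Local Open Scope ring_scope.

Section Gen.
Variables (K : fieldType) (n : nat) (phi : 'M[K]_n.+1).

Lemma gen_exists a : exists G : 'M[K]_(\rank (eigenspace phi a), n.+1),
  (G <= geigenspace phi a)%MS /\
  (geigenspace phi a <= \sum_(j < n.+1) <<G *m (phi - a%:M) ^+ j>>)%MS.
Proof.
set N := phi - a%:M; set V := geigenspace phi a.
have VE : V = kermx (N ^+ n.+1) by rewrite /V geigenspaceE.
have V0 : V *m N ^+ n.+1 = 0 by rewrite VE mulmx_ker.
have VNV : (V *m N <= V)%MS.
  rewrite {2}VE; apply/sub_kermxP.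
  have -> : V *m N *m N ^+ n.+1 = V *m N ^+ n.+1 *m N.
    by rewrite -!mulmxA; congr (_ *m _); rewrite !mulmxE -exprS -exprSr.
  by rewrite V0 mul0mx.
have UV : (eigenspace phi a <= V)%MS by apply: eigenspace_sub_geigen.
have rk : \rank (V :\: V *m N) = \rank (eigenspace phi a).
  have := mxrank_cap_compl V (V *m N).
  have := mxrank_mul_ker V N.
  have e1 : (V :&: V *m N :=: V *m N)%MS by apply/capmx_idPr.
  have e2 : (V :&: kermx N :=: eigenspace phi a)%MS by apply/capmx_idPr.
  rewrite e1 e2 => <-.
  by move/eqP; rewrite eqn_add2l => /eqP.
have sub1 : (V <= row_base (V :\: V *m N) + V *m N)%MS.
  rewrite -{1}(addsmx_diff_cap_eq V (V *m N)).
  apply: addsmxS; first by rewrite eq_row_base.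
  exact: capmxSr.
have Gsub : (row_base (V :\: V *m N) <= V)%MS by rewrite eq_row_base diffmxSl.
move: (\rank (V :\: V *m N)%MS) (row_base (V :\: V *m N)%MS) rk sub1 Gsub => r G rk sub1 Gsub.
subst r; exists G; split => //.
have ind k : (V <= \sum_(j < k) <<G *m N ^+ j>> + V *m N ^+ k)%MS.
  elim: k => [|k IH]; first by rewrite big_ord0 expr0 mulmx1 addsmxSr.
  apply: (submx_trans IH); rewrite big_ord_recr /= -addsmxA addsmxS //.
  rewrite (adds_eqmx (genmxE _) (eqmx_refl _)).
  apply: (submx_trans (submxMr (N ^+ k) sub1)).
  have e : N *m N ^+ k = N ^+ k.+1 by rewrite exprS.
  by rewrite addsmxMr -mulmxA e.
apply: (submx_trans (ind n.+1)).
by rewrite V0 addsmx0 submx_refl.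
Qed.
Lemma span_poly m a (G : 'M_(m, n.+1)) (v : 'rV_n.+1) :
  (v <= \sum_(j < n.+1) <<G *m (phi - a%:M) ^+ j>>)%MS ->
  exists x : 'I_m -> {poly K}, v = \sum_l row l G *m horner_mx phi (x l).
Proof.
move=> /sub_sums_genmxP [u ->].
exists (fun l => \sum_(j < n.+1) u j 0 l *: ('X - a%:P) ^+ j).
have hE l : horner_mx phi (\sum_(j < n.+1) u j 0 l *: ('X - a%:P) ^+ j)
   = \sum_(j < n.+1) u j 0 l *: (phi - a%:M) ^+ j.
  rewrite rmorph_sum; apply: eq_bigr => j _.
  by rewrite -mul_polyC rmorphM /= horner_mx_C [_ * _]mul_scalar_mx rmorphXn /= rmorphB /= horner_mx_X horner_mx_C.
  symmetry; under eq_bigr do rewrite hE mulmx_sumr.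
rewrite exchange_big /=; apply: eq_bigr => j _.
rewrite mulmxA (mulmx_sum_row (u j) G) mulmx_suml; apply: eq_bigr => l _.
by rewrite -scalemxAl scalemxAr.
Qed.
End Gen.
Section Main.
Variables (K : closedFieldType) (n : nat) (phi : 'M[K]_n.+1) (p : nat) (lam : 'I_p -> K).
Hypothesis lam_inj : injective lam.
Hypothesis lam_all : forall a : K, eigenvalue phi a -> exists i, a = lam i.

Let Q i := ('X - (lam i)%:P) ^+ n.+1.

Lemma Qcop i j : j != i -> coprimep (Q i) (Q j).
Proof.
move=> ji; rewrite /Q coprimep_expr ?coprimep_expl// coprimep_XsubC root_XsubC.
by apply: contra ji => /eqP /lam_inj ->.
Qed.

Lemma prod_dvd (rs : seq K) : (forall z, z \in rs -> exists i, z = lam i) ->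
  \prod_(z <- rs) ('X - z%:P) %| (\prod_i ('X - (lam i)%:P)) ^+ size rs.
Proof.
elim: rs => [|z rs IH] H; first by rewrite big_nil dvd1p.
rewrite big_cons /= exprS dvdp_mul ?IH //; last by move=> y yr; apply: H; rewrite inE yr orbT.
have [i ->] := H z (mem_head _ _).
by rewrite (bigD1 i) //= dvdp_mulIl.
Qed.

Lemma full : (1%:M <= \sum_i geigenspace phi (lam i))%MS.
Proof.
have e : (kermxpoly phi (\prod_i Q i) :=: \sum_i kermxpoly phi (Q i))%MS.
  by apply: kermxpoly_prod => i j _ _; apply: Qcop.
rewrite -e kermxpoly_min //.
apply: dvdp_trans (mxminpoly_dvd_char phi) _.
have [rs Hrs] := closed_field_poly_normal (char_poly phi).
have mon := char_poly_monic phi.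
rewrite (monicP mon) scale1r in Hrs.
have sz : size rs = n.+1.
  by have := size_char_poly phi; rewrite Hrs size_prod_XsubC => -[].
rewrite Hrs /Q prodrXl -sz; apply: prod_dvd => z zr.
apply: lam_all; rewrite eigenvalue_root_char Hrs root_prod_XsubC //.
Qed.

Lemma proj_exists i : exists e : {poly K},
  (forall v : 'rV_n.+1, (v <= geigenspace phi (lam i))%MS -> v *m horner_mx phi e = v) /\
  (forall j (v : 'rV_n.+1), j != i -> (v <= geigenspace phi (lam j))%MS -> v *m horner_mx phi e = 0).
Proof.
have cop : coprimep (Q i) (\prod_(j | j != i) Q j).
  apply: (big_ind (fun q => coprimep (Q i) q)); first exact: coprimep1.
    by move=> x y hx hy; rewrite coprimepMr hx hy.
  by move=> j ji; apply: Qcop.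
have [[u w] /= Huw] := Bezout_eq1_coprimepP _ _ cop.
exists (w * \prod_(j | j != i) Q j); split.
  move=> v /sub_kermxP vQ.
  have -> : w * \prod_(j | j != i) Q j = 1 - Q i * u.
    by rewrite -[in RHS]Huw (mulrC (Q i)) addrAC subrr add0r.
  rewrite rmorphB rmorph1 /= rmorphM /= mulmxBr mulmx1 -mulmxE mulmxA.
  by rewrite (_ : v *m horner_mx phi (Q i) = 0) ?mul0mx ?subr0 //; exact: vQ.
move=> j v ji /sub_kermxP vQ.
rewrite (bigD1 j) //= mulrCA rmorphM /= -mulmxE mulmxA.
have -> : v *m horner_mx phi (Q j) = 0 by exact: vQ.
by rewrite mul0mx.
Qed.


Definition asb (P : Prop) : bool :=
  if ClassicalEpsilon.excluded_middle_informative P then true else false.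
Lemma asbP (P : Prop) : asb P <-> P.
Proof. by rewrite /asb; case: ClassicalEpsilon.excluded_middle_informative. Qed.

Lemma comm_poly (psi : 'M[K]_n.+1) q :
  psi *m phi = phi *m psi -> psi *m horner_mx phi q = horner_mx phi q *m psi.
Proof. by move=> h; apply: comm_mx_horner. Qed.

Lemma comm_N (psi : 'M[K]_n.+1) a j :
  psi *m phi = phi *m psi -> psi *m (phi - a%:M) ^+ j = (phi - a%:M) ^+ j *m psi.
Proof.
move=> h; have := comm_poly (('X - a%:P) ^+ j) h.
by rewrite rmorphXn /= rmorphB /= horner_mx_X horner_mx_C.
Qed.


Lemma main_succ :
  let m := fun i : 'I_p => \rank (eigenspace phi (lam i)) in
  exists S : forall i : 'I_p, pred 'M[{poly K}]_(m i),
    (forall i, is_K_subalgebra (S i)) /\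
    exists f : (forall i : 'I_p, 'M[{poly K}]_(m i)) -> 'M[K]_n.+1,
      let inP := fun A : forall i, 'M[{poly K}]_(m i) => forall i, A i \in S i in
      ([/\ f (fun i => 1%:M) = 1%:M,
          forall A B, inP A -> inP B -> f (fun i => A i + B i) = f A + f B,
          forall A B, inP A -> inP B -> f (fun i => A i *m B i) = f A *m f B
        & forall (c : K) A, inP A -> f (fun i => c%:P *: A i) = c *: f A] /\
       (forall A, inP A -> f A \in centralizer phi) /\
       (forall psi, psi \in centralizer phi -> exists2 A, inP A & f A = psi)).
Proof.
move=> m.
have [G HG] := fin_all_exists (fun i => gen_exists phi (lam i)).
have [e He] := fin_all_exists proj_exists.
pose Comm (psi : 'M[K]_n.+1) := psi *m phi = phi *m psi.
pose Rel i (A : 'M[{poly K}]_(m i)) (psi : 'M[K]_n.+1) :=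
  forall k, row k (G i) *m psi = \sum_l row l (G i) *m horner_mx phi (A k l).
pose S i := fun A : 'M[{poly K}]_(m i) => asb (exists psi, Comm psi /\ Rel i A psi).
have inS i A : A \in S i <-> exists psi, Comm psi /\ Rel i A psi.
  by rewrite unfold_in /S; apply: asbP.
have Comm1 : Comm 1%:M by rewrite /Comm mul1mx mulmx1.
have CommD psi chi : Comm psi -> Comm chi -> Comm (psi + chi).
  by rewrite /Comm => h1 h2; rewrite mulmxDl mulmxDr h1 h2.
have CommN psi : Comm psi -> Comm (- psi).
  by rewrite /Comm => h1; rewrite mulNmx mulmxN h1.
have CommM psi chi : Comm psi -> Comm chi -> Comm (psi *m chi).
  by rewrite /Comm => h1 h2; rewrite -mulmxA h2 !mulmxA h1.
have CommZ c psi : Comm psi -> Comm (c *: psi).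
  by rewrite /Comm => h1; rewrite -scalemxAl h1 scalemxAr.
have Rel1 i : Rel i 1%:M 1%:M.
  move=> k; rewrite mulmx1 (bigD1 k) //= big1 ?addr0.
    by rewrite mxE eqxx mulr1n rmorph1 mulmx1.
  by move=> l lk; rewrite mxE eq_sym (negbTE lk) mulr0n rmorph0 mulmx0.
have RelD i A B psi chi : Rel i A psi -> Rel i B chi -> Rel i (A + B) (psi + chi).
  move=> h1 h2 k; rewrite mulmxDr h1 h2 -big_split /=; apply: eq_bigr => l _.
  by rewrite mxE rmorphD mulmxDr.
have RelM i A B psi chi : Comm chi -> Rel i A psi -> Rel i B chi ->
    Rel i (A *m B) (psi *m chi).
  move=> cc h1 h2 k; rewrite mulmxA h1 mulmx_suml.
  under eq_bigr do rewrite -mulmxA -comm_poly // mulmxA h2 mulmx_suml.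
  rewrite exchange_big /=; apply: eq_bigr => j _.
  rewrite mxE rmorph_sum mulmx_sumr; apply: eq_bigr => l _.
  by rewrite -mulmxA mulrC rmorphM.
have RelZ i c A psi : Rel i A psi -> Rel i (c%:P *: A) (c *: psi).
  move=> h k; rewrite -scalemxAr h scaler_sumr; apply: eq_bigr => l _.
  by rewrite mxE rmorphM /= horner_mx_C [_ * _]mul_scalar_mx scalemxAr.
have uniq0 psi : Comm psi -> (forall i k, row k (G i) *m psi = 0) -> psi = 0.
  move=> cp h.
  have sub i : (geigenspace phi (lam i) <= kermx psi)%MS.
    apply: submx_trans (HG i).2 _; apply/sumsmx_subP => j _.
    rewrite genmxE; apply/sub_kermxP.
    rewrite -mulmxA -comm_N // mulmxA.
    have -> : G i *m psi = 0 by apply/row_matrixP => k; rewrite row_mul h row0.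
    by rewrite mul0mx.
  have : (1%:M <= kermx psi)%MS.
    by apply: submx_trans full _; apply/sumsmx_subP => i _.
  by move/sub_kermxP; rewrite mul1mx.
pose f (A : forall i, 'M[{poly K}]_(m i)) :=
  epsilon (inhabits 0) (fun psi => Comm psi /\ forall i, Rel i (A i) psi).
have char A psi : Comm psi -> (forall i, Rel i (A i) psi) -> f A = psi.
  move=> cp rp.
  have [cf rf] : Comm (f A) /\ forall i, Rel i (A i) (f A).
    by apply: (epsilon_spec (inhabits 0) (fun psi => Comm psi /\ forall i, Rel i (A i) psi)); exists psi.
  apply/eqP; rewrite -subr_eq0; apply/eqP; apply: uniq0; first by apply: CommD => //; apply: CommN.
  by move=> i k; rewrite mulmxBr rf rp subrr.
have fspec A : (forall i, A i \in S i) -> Comm (f A) /\ forall i, Rel i (A i) (f A).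
  move=> hA.
  have [psi Hpsi] := fin_all_exists (fun i => (inS i (A i)).1 (hA i)).
  pose chi := \sum_i horner_mx phi (e i) *m psi i.
  suff [cc rc] : Comm chi /\ forall i, Rel i (A i) chi by rewrite (char A chi cc rc).
  split.
    rewrite /chi; apply: (big_ind Comm) => //.
      by rewrite /Comm mul0mx mulmx0.
    move=> i _; apply: CommM; last exact: (Hpsi i).1.
    exact: esym (comm_poly (e i) (erefl _)).
  move=> j k; rewrite /chi mulmx_sumr (bigD1 j) //= big1 ?addr0.
    rewrite mulmxA (He j).1; first exact: (Hpsi j).2.
    exact: submx_trans (row_sub k (G j)) (HG j).1.
  move=> i ij; rewrite mulmxA (proj2 (He i) j) ?mul0mx 1?eq_sym //.
  exact: submx_trans (row_sub k (G j)) (HG j).1.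
exists S; split.
  move=> i; split.
  - by apply/inS; exists 1%:M; split.
  - move=> A B /inS [psi [c1 r1]] /inS [chi [c2 r2]]; apply/inS.
    by exists (psi + chi); split; [apply: CommD | apply: RelD].
  - move=> A B /inS [psi [c1 r1]] /inS [chi [c2 r2]]; apply/inS.
    by exists (psi *m chi); split; [apply: CommM | apply: RelM].
  - move=> c A /inS [psi [c1 r1]]; apply/inS.
    by exists (c *: psi); split; [apply: CommZ | apply: RelZ].
exists f => inP; split; [split|split].
- by apply: char => // i; apply: Rel1.
- move=> A B hA hB; have [c1 r1] := fspec A hA; have [c2 r2] := fspec B hB.
  by apply: char => [|i]; [apply: CommD | apply: RelD].
- move=> A B hA hB; have [c1 r1] := fspec A hA; have [c2 r2] := fspec B hB.
  by apply: char => [|i]; [apply: CommM | apply: RelM].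
- move=> c A hA; have [c1 r1] := fspec A hA.
  by apply: char => [|i]; [apply: CommZ | apply: RelZ].
- by move=> A hA; have [c1 _] := fspec A hA; rewrite unfold_in /centralizer; apply/eqP.
move=> psi; rewrite unfold_in /centralizer => /eqP cp.
have ex i : exists A : 'M[{poly K}]_(m i), Rel i A psi.
  have ex k : exists x : 'I_(m i) -> {poly K},
      row k (G i) *m psi = \sum_l row l (G i) *m horner_mx phi (x l).
    apply: span_poly; apply: submx_trans _ (HG i).2.
    have st := comm_mx_stable_geigenspace (lam i) (esym cp).
    apply: submx_trans _ st; apply: submxMr.
    exact: submx_trans (row_sub k (G i)) (HG i).1.
  have [X HX] := fin_all_exists ex.
  by exists (\matrix_(k, l) X k l) => k; rewrite HX; apply: eq_bigr => l _; rewrite mxE.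
have [A HA] := fin_all_exists ex.
exists A; first by move=> i; apply/inS; exists psi.
exact: char.
Qed.

End Main.

Unset Implicit Arguments.
Theorem theorem5p2 (K : closedFieldType) (n : nat) (phi : 'M[K]_n)
    (p : nat) (lam : 'I_p -> K)
    (lam_inj : injective lam)
    (lam_all : forall a : K, eigenvalue phi a <-> exists i, a = lam i) :
  let m := fun i : 'I_p => \rank (eigenspace phi (lam i)) in
  exists S : forall i : 'I_p, pred 'M[{poly K}]_(m i),
    (forall i, is_K_subalgebra (S i)) /\
    exists f : (forall i : 'I_p, 'M[{poly K}]_(m i)) -> 'M[K]_n,
      let inP := fun A : forall i, 'M[{poly K}]_(m i) => forall i, A i \in S i in
      ([/\ f (fun i => 1%:M) = 1%:M,
          forall A B, inP A -> inP B -> f (fun i => A i + B i) = f A + f B,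
          forall A B, inP A -> inP B -> f (fun i => A i *m B i) = f A *m f B
        & forall (c : K) A, inP A -> f (fun i => c%:P *: A i) = c *: f A] /\
       (forall A, inP A -> f A \in centralizer phi) /\
       (forall psi, psi \in centralizer phi -> exists2 A, inP A & f A = psi)).
Proof.
case: n phi lam_all => [|n] phi lam_all; last first.
  by apply: main_succ => // a /lam_all.
move=> m.
have all0 (A B : 'M[K]_0) : A = B by rewrite (flatmx0 A) (flatmx0 B).
exists (fun i => fun _ => true); split; first by move=> i; split.
exists (fun _ => 1%:M) => inP; split; [split|split].
all: first [ by apply: all0
           | by move=> *; apply: all0
           | by move=> *; rewrite unfold_in /centralizer; apply/eqP; apply: all0
           | by move=> psi _; exists (fun i => 0) => //; apply: all0 ].
Qed.
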